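(* Let $\mathbb{B}$ be a bouquet that has a certificate of pseudo-orientability. Then every bouquet that is a partial dual of $\mathbb{B}$ also has a certificate of pseudo-orientability.
   Context: A ribbon graph is a surface with boundary written as a union of vertex discs and edge discs meeting in disjoint line segments, each on the boundary of exactly one vertex and one edge, each edge containing exactly two such segments (its ends). A bouquet is a ribbon graph with one vertex $v$; its edges are loops; a loop $e$ is orientable if $v\cup e$ is an annulus, non-orientable if it is a Möbius band. A certificate of pseudo-orientability of a bouquet is a pair $(S_1,S_2)$ of closed arcs covering the boundary circle of $v$ and meeting in exactly two points, such that both ends of each orientable loop lie in the interior of one $S_i$ and each non-orientable loop has one end in the interior of $S_1$ and the other in the interior of $S_2$. For $X\subseteq E(\mathbb{B})$, the partial dual $\mathbb{B}^X$ has the same edges and, as vertices, discs glued along each boundary component of the spanning ribbon subgraph $(V(\mathbb{B}),X)$, the old vertex discarded. *)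

(* Defs.v *)
From mathcomp Require Import all_boot.
Set Implicit Arguments. Unset Strict Implicit. Unset Printing Implicit Defensive.

(* Flags F: for each edge e (a rectangle) the 4 corner points of its two
   attaching segments (ends).  For a flag x:
   - eps x : the other endpoint of the same end segment of the same edge;
   - sig x : the endpoint at the other end of the same long side of the edge;
   - nu  x : the next flag along the vertex boundary, across the vertex arc
             that is not covered by an edge end;
   - edg x : the edge the flag belongs to. *)
Record rdata (F E : finType) := RData {
  eps : F -> F; sig : F -> F; nu : F -> F; edg : F -> E }.

Definition fpf_involution (F : finType) (f : F -> F) :=
  forall x, f (f x) = x /\ f x <> x.

Definition is_ribbon_graph (F E : finType) (G : rdata F E) :=
  [/\ fpf_involution (eps G), fpf_involution (sig G), fpf_involution (nu G),
      (forall x, eps G (sig G x) = sig G (eps G x) /\ eps G x <> sig G x)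
    & (forall x y, edg G x = edg G y <->
                   y \in [:: x; eps G x; sig G x; eps G (sig G x)])]
  /\ (forall e, exists x, edg G x = e).

(* vertices = orbits of <eps, nu>; a bouquet has exactly one vertex *)
Definition vrel (F E : finType) (G : rdata F E) : rel F :=
  fun x y => (y == eps G x) || (y == nu G x).

Definition bouquet (F E : finType) (G : rdata F E) :=
  (exists x : F, True) /\ forall x y : F, connect (vrel G) x y.

(* the loop e is orientable iff the surface v ∪ e is orientable
   (i.e. an annulus rather than a Moebius band): its flag graph
   (eps, nu, and sig restricted to the flags of e) is bipartite. *)
Definition orientable_loop (F E : finType) (G : rdata F E) (e : E) :=
  exists s : F -> bool, forall x,
    [/\ s (eps G x) = ~~ s x, s (nu G x) = ~~ s x
      & edg G x = e -> s (sig G x) = ~~ s x].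

(* certificate of pseudo-orientability: c x says whether the point x of the
   vertex boundary lies in S1 (true) or S2 (false).  Each end lies in the
   interior of one arc (c constant on end segments); the two cut points lie
   in vertex arcs, so at most two vertex arcs {x, nu x} change colour
   (i.e. at most 4 flags x with c x != c (nu x)); orientable loops have both
   ends in the same arc, non-orientable ones in different arcs. *)
Definition has_certificate (F E : finType) (G : rdata F E) :=
  exists c : F -> bool,
    [/\ (forall x, c (eps G x) = c x),
        #|[set x | c x != c (nu G x)]| <= 4
      & (forall x, c (sig G x) = c x <-> orientable_loop G (edg G x))].

(* partial dual w.r.t. a set X of edges: on flags of edges of X the roles
   of ends and sides are exchanged; vertex arcs (nu) are unchanged. *)
Definition pdual (F E : finType) (G : rdata F E) (X : {set E}) : rdata F E :=
  RData (fun x => if edg G x \in X then sig G x else eps G x)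
        (fun x => if edg G x \in X then eps G x else sig G x)
        (nu G) (edg G).

(* Main.v *)
Require Import Defs.
From mathcomp Require Import all_boot.

Section Aux.
Context {F : finType}.

Lemma no_orb (a b : F -> F) : fpf_involution a -> fpf_involution b ->
  forall n x, iter n (fun z => b (a z)) x <> a x.
Proof.
move=> Ha Hb.
suff H : forall n, (forall x, iter n (fun z => b (a z)) x <> a x) /\
                   (forall x, iter n.+1 (fun z => b (a z)) x <> a x).
  by move=> n; case: (H n).
elim=> [|n [IH1 IH2]].
  split=> x /=.
    by move=> E; case: (Ha x) => _ H; apply: H; rewrite -E.
  by case: (Hb (a x)).
split=> // x E.
apply: (IH1 (b (a x))).
rewrite -iterSr.
have E2 : b (a (iter n.+1 (fun z => b (a z)) x)) = a x by rewrite -E.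
have E3 : a (iter n.+1 (fun z => b (a z)) x) = b (a x).
  by rewrite -E2; case: (Hb (a (iter n.+1 (fun z => b (a z)) x))).
by rewrite -E3; case: (Ha (iter n.+1 (fun z => b (a z)) x)).
Qed.

Lemma two_col (a b : F -> F) : fpf_involution a -> fpf_involution b ->
  exists s : F -> bool, forall x, s (a x) = ~~ s x /\ s (b x) = ~~ s x.
Proof.
move=> Ha Hb.
pose r := fun z => b (a z).
have aa : forall z, a (a z) = z by move=> z; case: (Ha z).
have bb : forall z, b (b z) = z by move=> z; case: (Hb z).
have injr : injective r.
  by move=> x y; rewrite /r => E; rewrite -(aa x) -(aa y) -(bb (a x)) E bb.
have symr := fconnect_sym injr.
have neq : forall x, froot r x <> froot r (a x).
  move=> x /(rootP symr) C.
  exact: (@no_orb a b Ha Hb _ x (iter_findex C)).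
pose s := fun x => (enum_rank (froot r x) < enum_rank (froot r (a x)))%N.
have key : forall x, s (a x) = ~~ s x.
  move=> x; rewrite /s aa.
  have : enum_rank (froot r x) != enum_rank (froot r (a x)).
    by apply/negP => /eqP /enum_rank_inj /neq.
  by move=> H; rewrite ltn_neqAle eq_sym H /= leqNgt.
exists s => x; split; first exact: key.
have E1 : froot r (b x) = froot r (a x).
  apply/esym/(rootP symr).
  have -> : b x = r (a x) by rewrite /r aa.
  exact: fconnect1.
have E2 : froot r (a (b x)) = froot r x.
  apply/(rootP symr).
  have {2}-> : x = r (a (b x)) by rewrite /r aa bb.
  exact: fconnect1.
by rewrite -key /s E1 E2 aa.
Qed.

End Aux.

Lemma orient {F E : finType} (H : rdata F E) (s : F -> bool) (x : F) :
  (forall z, s (eps H z) = ~~ s z /\ s (nu H z) = ~~ s z) ->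
  (forall z, sig H (sig H z) = z) ->
  (forall z, eps H (sig H z) = sig H (eps H z)) ->
  (forall y, edg H y = edg H x -> y \in [:: x; eps H x; sig H x; eps H (sig H x)]) ->
  connect (vrel H) x (sig H x) ->
  orientable_loop H (edg H x) <-> s (sig H x) = ~~ s x.
Proof.
move=> Hs sigK Hc Hedg Hcon; split.
  move=> [s0 Hs0].
  have cl : closed (vrel H) [pred z | s z (+) s0 z].
    move=> y z /orP [] /eqP ->; rewrite !inE /=.
      by case: (Hs y) => -> _; case: (Hs0 y) => -> _ _; case: (s y); case: (s0 y).
    by case: (Hs y) => _ ->; case: (Hs0 y) => _ -> _; case: (s y); case: (s0 y).
  have := closed_connect cl Hcon; rewrite !inE /=.
  case: (Hs0 x) => _ _ /(_ erefl) ->.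
  by case: (s x); case: (s0 x); case: (s (sig H x)).
move=> Hsx; exists s => y; split; try by case: (Hs y).
move/Hedg; rewrite !inE => /or4P [] /eqP ->.
- exact: Hsx.
- by rewrite -Hc !(proj1 (Hs _)) Hsx.
- by rewrite sigK Hsx negbK.
- by rewrite -Hc sigK !(proj1 (Hs _)) Hsx negbK.
Qed.

Theorem lemma3p10 (F E : finType) (G : rdata F E) :
  is_ribbon_graph G -> bouquet G -> has_certificate G ->
  forall X : {set E}, bouquet (pdual G X) -> has_certificate (pdual G X).
Proof.
move=> [[He Hs Hn Hc Hedg] _] [_ Gconn] [c [c1 c2 c3]] X [_ G'conn].
have epsK : forall z, eps G (eps G z) = z by move=> z; case: (He z).
have sigK : forall z, sig G (sig G z) = z by move=> z; case: (Hs z).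
have comm : forall z, eps G (sig G z) = sig G (eps G z) by move=> z; case: (Hc z).
have edg_eps : forall z, edg G (eps G z) = edg G z.
  by move=> z; apply/esym/(Hedg z); rewrite !inE eqxx orbT.
have edg_sig : forall z, edg G (sig G z) = edg G z.
  by move=> z; apply/esym/(Hedg z); rewrite !inE eqxx !orbT.
have HedgG : forall x y, edg G y = edg G x ->
    y \in [:: x; eps G x; sig G x; eps G (sig G x)].
  by move=> x y Exy; apply/(Hedg x y)/esym.
have He' : fpf_involution (eps (pdual G X)).
  move=> z /=; case hz: (edg G z \in X).
    by rewrite edg_sig hz; case: (Hs z).
  by rewrite edg_eps hz; case: (He z).
have [s Hs0] := two_col _ _ He Hn.
have [s' Hs'] := two_col _ _ He' Hn.
have orG : forall x, orientable_loop G (edg G x) <-> s (sig G x) = ~~ s x.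
  move=> x; apply: orient => //; exact: HedgG.
have orG' : forall x, orientable_loop (pdual G X) (edg G x) <->
    s' (sig (pdual G X) x) = ~~ s' x.
  move=> x; apply: (orient (pdual G X)) => //=.
  - by move=> z; case hz: (edg G z \in X); rewrite ?edg_sig ?edg_eps hz.
  - by move=> z; case hz: (edg G z \in X); rewrite ?edg_sig ?edg_eps hz ?comm.
  - move=> y /HedgG; case hz: (edg G x \in X); rewrite ?edg_sig ?edg_eps hz //.
    rewrite !inE comm => /or4P [] ->; by rewrite ?orbT.
have weps : forall x, s (eps G x) (+) c (eps G x) = ~~ (s x (+) c x).
  by move=> x; rewrite c1 (proj1 (Hs0 x)); case: (s x); case: (c x).
have wsig : forall x, s (sig G x) (+) c (sig G x) = ~~ (s x (+) c x).
  move=> x.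
  have E' : (c (sig G x) == c x) = (s (sig G x) == ~~ s x).
    by apply/idP/idP => /eqP H; apply/eqP; [apply/orG/c3 | apply/c3/orG].
  by move: E'; case: (s (sig G x)) (s x) (c (sig G x)) (c x) => [] [] [] [].
exists (fun x => s x (+) c x (+) s' x); split.
- move=> x /=; rewrite (proj1 (Hs' x)) /=.
  by case: ifP => _; rewrite ?wsig ?weps; case: (s x (+) c x); case: (s' x).
- apply: leq_trans c2; apply: eq_leq; apply: eq_card => x.
  rewrite !inE /= (proj2 (Hs0 x)).
  have := proj2 (Hs' x); rewrite /= => ->.
  by case: (s x); case: (s' x); case: (c x); case: (c (nu G x)).
- move=> x.
  have wsig' : s (sig (pdual G X) x) (+) c (sig (pdual G X) x) = ~~ (s x (+) c x).
    by rewrite /=; case: ifP => _; rewrite ?wsig ?weps.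
  rewrite wsig'; apply: (iff_trans _ (iff_sym (orG' x))).
  move: (s x (+) c x) => b.
  case: (s' (sig (pdual G X) x)) (s' x) b => [] [] [] /=; by split=> H; try discriminate H.
Qed.
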